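(* Let $\mathfrak A$ be a structure. If $\mathfrak A$ is epc for $\mathrm{pp\text{-}Th}(\mathfrak A)$, then $\mathfrak A$ is a core. Conversely, if $\mathfrak A$ is pp-saturated (or finite) and its signature contains a relation symbol for every relation pp-definable in $\mathfrak A$, and $\mathfrak A$ is a core, then $\mathfrak A$ is epc for $\mathrm{pp\text{-}Th}(\mathfrak A)$.
   Context: pp-formulas are built from atomic formulas (including equalities and $\bot$) using $\wedge$ and $\exists$. $\mathrm{pp\text{-}Th}(\mathfrak A)$ is the set of pp-sentences true in $\mathfrak A$ together with the negations of pp-sentences false in $\mathfrak A$. A model $\mathfrak A$ of a theory $T$ is epc for $T$ if for every homomorphism $h$ from $\mathfrak A$ to a model $\mathfrak B$ of $T$, every tuple $\bar a$ from $A$ and every pp-formula $\phi$ with $\mathfrak B\models\phi(h(\bar a))$, we have $\mathfrak A\models\phi(\bar a)$. $\mathfrak A$ is a core if all its endomorphisms are embeddings (injective homomorphisms also preserving complements of relations). $\mathfrak A$ is pp-saturated if it is pp-$|A|$-saturated: for every sequence of fewer than $|A|$ parameters from $A$, every set of pp-formulas in one free variable over these parameters that is consistent with the theory of $\mathfrak A$ with the parameters named is realised in $A$. *)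

(* Defs.v *)
From mathcomp Require Import all_boot.
From Stdlib Require List.
Set Implicit Arguments. Unset Strict Implicit. Unset Printing Implicit Defensive.

Record signature := Signature { sym : Type; arity : sym -> nat }.

Record structure (S : signature) := Structure {
  carrier :> Type;
  interp : forall r : sym S, ('I_(arity r) -> carrier) -> Prop }.

Arguments interp {S} s r _.

Inductive ppf (S : signature) : Type :=
  | PBot
  | PEq (i j : nat)
  | PRel (r : sym S) (args : 'I_(arity r) -> nat)
  | PAnd (f g : ppf S)
  | PEx (i : nat) (f : ppf S).
Arguments PBot {S}.
Arguments PEq {S} i j.

Definition update (T : Type) (v : nat -> T) (i : nat) (a : T) : nat -> T :=
  fun n => if n == i then a else v n.

Fixpoint sat (S : signature) (A : structure S) (v : nat -> A) (f : ppf S) : Prop :=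
  match f with
  | PBot => False
  | PEq i j => v i = v j
  | PRel r args => interp A r (fun k => v (args k))
  | PAnd f g => sat v f /\ sat v g
  | PEx i f => exists a : A, sat (update v i a) f
  end.

Fixpoint free (S : signature) (f : ppf S) (n : nat) : Prop :=
  match f with
  | PBot => False
  | PEq i j => n = i \/ n = j
  | PRel r args => exists k, args k = n
  | PAnd f g => free f n \/ free g n
  | PEx i f => n <> i /\ free f n
  end.

Definition sentence (S : signature) (f : ppf S) : Prop := forall n, ~ free f n.

Definition holds (S : signature) (A : structure S) (f : ppf S) : Prop :=
  forall v : nat -> A, sat v f.

Inductive literal (S : signature) : Type :=
  | Pos (f : ppf S)
  | Neg (f : ppf S).

Definition theory (S : signature) := literal S -> Prop.

Definition model (S : signature) (T : theory S) (B : structure S) : Prop :=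
  forall l, T l -> match l with
                   | Pos f => holds B f
                   | Neg f => ~ holds B f
                   end.

Definition ppTh (S : signature) (A : structure S) : theory S :=
  fun l => match l with
           | Pos f => sentence f /\ holds A f
           | Neg f => sentence f /\ ~ holds A f
           end.

Definition hom (S : signature) (A B : structure S) (h : A -> B) : Prop :=
  forall (r : sym S) (t : 'I_(arity r) -> A), interp A r t -> interp B r (fun k => h (t k)).

Definition epc (S : signature) (T : theory S) (A : structure S) : Prop :=
  model T A /\
  forall (B : structure S) (h : A -> B), model T B -> hom h ->
    forall (v : nat -> A) (f : ppf S), sat (fun n => h (v n)) f -> sat v f.

Definition embedding (S : signature) (A B : structure S) (h : A -> B) : Prop :=
  hom h /\ (forall x y, h x = h y -> x = y) /\
  forall (r : sym S) (t : 'I_(arity r) -> A), interp B r (fun k => h (t k)) -> interp A r t.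

Definition core (S : signature) (A : structure S) : Prop :=
  forall e : A -> A, hom e -> embedding e.

Definition fewer_than_carrier (T : Type) (P : T -> Prop) : Prop :=
  ~ exists g : T -> {x : T | P x}, forall x y, g x = g y -> x = y.

(* A set of pp-formulas in the free variable 0 over
   parameters from P is given as a set of pairs (f, v), where v interprets
   the other free variables of f by parameters from P. Consistency with the
   theory of (A, P) is finite satisfiability in A. *)
Definition pp_saturated (S : signature) (A : structure S) : Prop :=
  forall (P : A -> Prop), fewer_than_carrier P ->
  forall (Sigma : ppf S -> (nat -> A) -> Prop),
    (forall f v, Sigma f v -> forall n, free f n -> n <> 0 -> P (v n)) ->
    (forall l : list (ppf S * (nat -> A)),
        (forall p, List.In p l -> Sigma p.1 p.2) ->
        exists a : A, forall p, List.In p l -> sat (update p.2 0 a) p.1) ->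
    exists a : A, forall f v, Sigma f v -> sat (update v 0 a) f.

Definition finite_structure (S : signature) (A : structure S) : Prop :=
  exists s : list A, forall a : A, List.In a s.

Definition pp_definable (S : signature) (A : structure S) (n : nat)
    (R : ('I_n -> A) -> Prop) : Prop :=
  exists f : ppf S, (forall m, free f m -> m < n) /\
    forall t : 'I_n -> A,
      R t <-> (forall v : nat -> A, (forall i : 'I_n, v i = t i) -> sat v f).

Definition all_pp_definable_named (S : signature) (A : structure S) : Prop :=
  forall (n : nat) (R : ('I_n -> A) -> Prop), @pp_definable S A n R ->
    exists (r : sym S) (e : arity r = n),
      forall t : 'I_n -> A, interp A r (fun k => t (cast_ord e k)) <-> R t.

(* Main.v *)
Require Import Defs.
From HB Require Import structures.
From mathcomp Require Import all_boot.
From mathcomp Require Import boolp wochoice.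
From Stdlib Require Import Classical.
Set Implicit Arguments. Unset Strict Implicit.

Definition eqT (T:Type) : eqType := HB.pack T (gen_eqMixin T).

Definition sLT (T : Type) (le : T -> T -> Prop) x y := le x y /\ x <> y.

Record WO (T : Type) (le : T -> T -> Prop) : Prop := {
  wo_refl : forall x, le x x;
  wo_trans : forall x y z, le x y -> le y z -> le x z;
  wo_anti : forall x y, le x y -> le y x -> x = y;
  wo_total : forall x y, le x y \/ le y x;
  wo_wf : well_founded (sLT le) }.

Definition MinWO (T : Type) (le : T -> T -> Prop) :=
  WO le /\ forall c, ~ exists g : T -> {d | sLT le d c}, injective g.

Lemma wo_exists (T : Type) : exists le : T -> T -> Prop, WO le.
Proof.
have [R HR] := well_ordering_principle (eqT T).
have Hmin : forall P : T -> Prop, (exists x, P x) ->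
    exists z, P z /\ (forall x, P x -> R z x) /\
      (forall z', P z' -> (forall x, P x -> R z' x) -> z' = z).
  move=> P [x Px].
  have [|z [[Pz Hz] Hu]] := HR (fun y : eqT T => `[< P y >]).
    by exists x; apply/asboolP.
  exists z; split; first by move/asboolP: Pz.
  split; first by move=> y Py; apply: Hz; apply/asboolP.
  move=> z' Pz' Hz'; symmetry; apply: Hu; split; first by apply/asboolP.
  by move=> y /asboolP; apply: Hz'.
have refl : forall x, R x x.
  by move=> x; have [z [-> [H _]]] := Hmin (fun y => y = x) (ex_intro _ x erefl); apply: H.
have anti : forall x y, R x y -> R y x -> x = y.
  move=> x y Rxy Ryx.
  have [z [_ [_ Hu]]] := Hmin (fun w => w = x \/ w = y) (ex_intro _ x (or_introl erefl)).
  rewrite (Hu x (or_introl erefl)); last by move=> w [->|->].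
  by rewrite (Hu y (or_intror erefl)) //; move=> w [->|->].
have total : forall x y, R x y \/ R y x.
  move=> x y.
  have [z [[->|->] [Hz _]]] := Hmin (fun w => w = x \/ w = y) (ex_intro _ x (or_introl erefl)).
    by left; apply: Hz; right.
  by right; apply: Hz; left.
exists (fun x y => R x y); split; [exact: refl| | exact: anti| exact: total|].
- move=> x y z Rxy Ryz.
  have [m [Pm [Hm _]]] := Hmin (fun w => w = x \/ w = y \/ w = z)
     (ex_intro _ x (or_introl erefl)).
  case: Pm => [Em|[Em|Em]]; subst m.
  + by apply: Hm; right; right.
  + by rewrite (anti x y Rxy (Hm x (or_introl erefl))).
  + have Ezy : z = y by apply: anti => //; apply: Hm; right; left.
    by rewrite Ezy.
- move=> x; apply: NNPP => nAx.
  have [z [nAz [Hz _]]] := Hmin (fun w => ~ Acc (sLT (fun x y => R x y)) w) (ex_intro _ x nAx).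
  apply: nAz; constructor => y [Ryz nyz].
  apply: NNPP => nAy; apply: nyz; apply: anti => //.
  exact: Hz.
Qed.

Lemma minwo_exists (T : Type) : exists le : T -> T -> Prop, MinWO le.
Proof.
have [le0 W0] := wo_exists T.
case: (classic (exists x0, exists g : T -> {d | sLT le0 d x0}, injective g)); last first.
  move=> H; exists le0; split; first exact: W0.
  move=> c Hc; apply: H; by exists c.
move=> Hex.
have [x0 [[g ginj] Hx0]] : exists x0, (exists g : T -> {d | sLT le0 d x0}, injective g) /\
     forall x, (exists g : T -> {d | sLT le0 d x}, injective g) -> le0 x0 x.
  apply: NNPP => H.
  have [x Px] := Hex.
  move: Px; pattern x; apply: (well_founded_ind (wo_wf W0)) => y IH Py.
  apply: H; exists y; split => // z Pz.
  case: (wo_total W0 y z) => // Hzy.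
  case: (classic (z = y)) => [->|nzy]; first by apply: (wo_refl W0).
  by case: (IH z (conj Hzy nzy) Pz).
pose g' x := proj1_sig (g x).
have g'inj : injective g'.
  move=> x y Exy; apply: ginj; move: Exy; rewrite /g'.
  case: (g x) => a pa; case: (g y) => b pb /= Eab.
  by move: pa pb; rewrite Eab => pa pb; rewrite (Prop_irrelevance pa pb).
exists (fun a b => le0 (g' a) (g' b)); split; first split.
- by move=> x; apply: (wo_refl W0).
- by move=> x y z; apply: (wo_trans W0).
- by move=> x y H1 H2; apply: g'inj; apply: (wo_anti W0).
- by move=> x y; apply: (wo_total W0).
- have Hacc : forall u, Acc (sLT le0) u -> forall b, g' b = u -> Acc (sLT (fun a b => le0 (g' a) (g' b))) b.
    move=> u; elim=> u' _ IH b Eb; constructor => a [Hab nab].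
    apply: (IH (g' a)) => //; split; rewrite -?Eb //.
    by move=> E; apply: nab; apply: g'inj.
  by move=> b; apply: (Hacc (g' b) (wo_wf W0 _)).
- move=> c [k kinj].
  have Hc : sLT le0 (g' c) x0 by rewrite /g'; case: (g c).
  have Hseg : forall x, sLT le0 (g' (proj1_sig (k x))) (g' c).
    move=> x; case: (k x) => b [Hb nb] /=; split => //.
    by move=> E; apply: nb; apply: g'inj.
  have : exists g2 : T -> {d | sLT le0 d (g' c)}, injective g2.
    exists (fun x => exist (fun d => sLT le0 d (g' c)) _ (Hseg x)) => x y E.
    apply: kinj; move: E; move: (Hseg x) (Hseg y).
    case: (k x) => a pa; case: (k y) => b pb /= p1 p2 E.
    have Eab : a = b by apply: g'inj; case: E.
    by move: pa pb; rewrite Eab => pa pb; rewrite (Prop_irrelevance pa pb).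
  move/Hx0 => H; case: Hc => H1 H2; apply: H2; apply: (wo_anti W0) => //.
Qed.
Lemma update_same T (v : nat -> T) i a : update v i a i = a.
Proof. by rewrite /update eqxx. Qed.
Lemma update_other T (v : nat -> T) i a n : n <> i -> update v i a n = v n.
Proof. by rewrite /update; case: eqP. Qed.

Lemma sat_ext S (A : structure S) (f : ppf S) : forall (v1 v2 : nat -> A),
  (forall n, free f n -> v1 n = v2 n) -> sat v1 f -> sat v2 f.
Proof.
elim: f => [|i j|r args|f IHf g IHg|i f IHf] v1 v2 /= E.
- by [].
- by rewrite !E; [| right| left].
- have -> : (fun k => v1 (args k)) = (fun k => v2 (args k)).
    by apply: funext => k; apply: E; exists k.
  by [].
- by case=> H1 H2; split; [apply: (IHf v1) | apply: (IHg v1)] => // n Hn; apply: E; [left|right].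
- case=> a Ha; exists a; apply: (IHf (update v1 i a)) => // n Hn.
  case: (pselect (n = i)) => [->|ni]; first by rewrite !update_same.
  by rewrite !update_other //; apply: E.
Qed.

Lemma sat_ext_iff S (A : structure S) (f : ppf S) (v1 v2 : nat -> A) :
  (forall n, free f n -> v1 n = v2 n) -> sat v1 f <-> sat v2 f.
Proof. by move=> E; split; apply: sat_ext => // n /E. Qed.

Fixpoint fv S (f : ppf S) : seq nat :=
  match f with
  | PBot => [::]
  | PEq i j => [:: i; j]
  | PRel r args => [seq args k | k <- enum 'I_(arity r)]
  | PAnd f g => fv f ++ fv g
  | PEx i f => [seq n <- fv f | n != i]
  end.

Lemma fvP S (f : ppf S) n : free f n <-> n \in fv f.
Proof.
elim: f n => [|i j|r args|f IHf g IHg|i f IHf] n /=.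
- by [].
- rewrite !inE; split; first by case=> ->; rewrite eqxx ?orbT.
  by case/orP=> /eqP ->; [left|right].
- split; first by case=> k <-; apply: map_f; rewrite mem_enum.
  by case/mapP=> k _ ->; exists k.
- rewrite mem_cat IHf IHg; split; first by case=> ->; rewrite ?orbT.
  by case/orP; [left|right].
- rewrite mem_filter IHf; split; first by case=> /eqP -> ->.
  by case/andP=> /eqP ? ->.
Qed.

Fixpoint rename S (s : nat -> nat) (f : ppf S) : ppf S :=
  match f with
  | PBot => PBot
  | PEq i j => PEq (s i) (s j)
  | PRel r args => @PRel S r (fun k => s (args k))
  | PAnd f g => PAnd (rename s f) (rename s g)
  | PEx i f => PEx (s i) (rename s f)
  end.

Lemma sat_rename S (A : structure S) (s : nat -> nat) (sinj : injective s) (f : ppf S) :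
  forall v : nat -> A, sat v (rename s f) <-> sat (fun n => v (s n)) f.
Proof.
elim: f => [|i j|r args|f IHf g IHg|i f IHf] v /=; try by [].
- by rewrite IHf IHg.
- have E : forall a, (fun n => update v (s i) a (s n)) = update (fun n => v (s n)) i a.
    move=> a; apply: funext => n; rewrite /update.
    case: (n =P i) => [->|ni]; first by rewrite eqxx.
    by case: eqP => // /sinj.
  by split; case=> a Ha; exists a; [rewrite -E -IHf | rewrite IHf E].
Qed.

Lemma free_rename S (s : nat -> nat) (sinj : injective s) (f : ppf S) n :
  free (rename s f) n -> exists m, n = s m /\ free f m.
Proof.
elim: f n => [|i j|r args|f IHf g IHg|i f IHf] n /=.
- by [].
- by case=> ->; eexists; split; [|left|reflexivity|right].
- by case=> k <-; exists (args k); split => //; exists k.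
- by case=> [/IHf|/IHg] [m [-> Hm]]; exists m; split => //; [left|right].
- case=> ni /IHf [m [Em Hm]]; exists m; split => //; split => // mi.
  by apply: ni; rewrite Em mi.
Qed.

Definition bindeq S (Z : seq nat) (f : ppf S) : ppf S :=
  foldr (fun n g => PEx n (PAnd (PEq n 0) g)) f Z.

Lemma sat_bindeq S (A : structure S) (Z : seq nat) (f : ppf S) :
  0 \notin Z -> forall v : nat -> A,
  sat v (bindeq Z f) <-> sat (fun m => if m \in Z then v 0 else v m) f.
Proof.
elim: Z => [|z Z IH] Hz v /=.
  by apply: sat_ext_iff.
rewrite inE negb_or in Hz; case/andP: Hz => z0 HZ.
have z0' : 0 <> z by move=> E; move: z0; rewrite E eqxx.
split.
- case=> a [Ea]; rewrite update_same update_other // in Ea.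
  rewrite IH // => H; apply: sat_ext H => n _.
  rewrite update_other // inE; case: (n =P z) => [->|nz] /=.
    by rewrite update_same Ea; case: ifP.
  by rewrite update_other //.
- move=> H; exists (v 0); split; first by rewrite update_same update_other.
  rewrite IH //; apply: sat_ext H => n _.
  rewrite update_other // inE; case: (n =P z) => [->|nz] /=.
    by rewrite update_same; case: ifP.
  by rewrite update_other //.
Qed.

Lemma free_bindeq S (Z : seq nat) (f : ppf S) n :
  free (bindeq Z f) n -> n = 0 \/ (n \notin Z /\ free f n).
Proof.
elim: Z n => [|z Z IH] n /=; first by right.
case=> nz [[E|E]|/IH]; [by case: nz|by left|].
case; first by left.
by case=> nZ Hf; right; rewrite inE negb_or nZ andbT; split => //; apply/eqP.
Qed.


Definition Sig S (A B : structure S) (h : A -> B) (le : A -> A -> Prop) (c : A)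
  (e : A -> A) : ppf S -> (nat -> A) -> Prop :=
  fun chi w => exists u : nat -> A,
    (forall m, free chi m -> m <> 0 -> sLT le (u m) c) /\
    (forall m, free chi m -> m <> 0 -> w m = e (u m)) /\
    sat (update (fun n => h (u n)) 0 (h c)) chi.

Definition Fsel S (A : structure S) (c : A) (Sg : ppf S -> (nat -> A) -> Prop) : A :=
  match pselect (exists a : A, forall f w, Sg f w -> sat (update w 0 a) f) with
  | left H => proj1_sig (cid H)
  | right _ => c
  end.

Lemma Fsel_spec S (A : structure S) (c : A) Sg :
  (exists a : A, forall f w, Sg f w -> sat (update w 0 a) f) ->
  forall f w, Sg f w -> sat (update w 0 (Fsel c Sg)) f.
Proof.
move=> H; rewrite /Fsel; case: pselect => // H'.
by case: (cid H') => a Ha /=.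
Qed.

Definition restr (T : Type) (lt : T -> T -> Prop) (c : T) (g : forall d, lt d c -> T) : T -> T :=
  fun d => match pselect (lt d c) with left p => g d p | right _ => d end.

Definition ebuild S (A B : structure S) (h : A -> B) (le : A -> A -> Prop)
  (wf : well_founded (sLT le)) : A -> A :=
  Fix wf (fun _ => A) (fun c g => Fsel c (Sig h le c (restr g))).

Lemma ebuild_eq S (A B : structure S) (h : A -> B) (le : A -> A -> Prop)
  (wf : well_founded (sLT le)) c :
  ebuild h wf c = Fsel c (Sig h le c (ebuild h wf)).
Proof.
rewrite /ebuild Fix_eq; last first.
  move=> x f g E; congr Fsel; congr Sig; apply: funext => d; rewrite /restr.
  by case: pselect.
congr Fsel; apply: funext => chi; apply: funext => w; apply: propext.
rewrite /Sig /restr; split; case=> u [H1 [H2 H3]]; exists u; split => //; split => //.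
- by move=> m Hm m0; rewrite H2 //; case: pselect => // /(_ (H1 m Hm m0)).
- by move=> m Hm m0; rewrite H2 //; case: pselect => // /(_ (H1 m Hm m0)).
Qed.

Definition GoodD S (A B : structure S) (h : A -> B) (e : A -> A) (D : A -> Prop) :=
  forall (psi : ppf S) (u : nat -> A), (forall n, free psi n -> D (u n)) ->
    sat (fun n => h (u n)) psi -> sat (fun n => e (u n)) psi.

Lemma base_sent S (A B : structure S) (h : A -> B) (e : A -> A) :
  model (ppTh A) B -> forall psi (u : nat -> A), (forall n, ~ free psi n) ->
  sat (fun n => h (u n)) psi -> sat (fun n => e (u n)) psi.
Proof.
move=> MB psi u Hn Hs.
case: (classic (holds A psi)) => [H|nH]; first exact: H.
have := MB (Neg psi) (conj Hn nH) => /=; case => v.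
by apply: sat_ext Hs => n /Hn.
Qed.

Lemma list_max (T : Type) (le : T -> T -> Prop) (W : WO le) (u : nat -> T) (l : seq nat) x0 :
  x0 \in l -> exists n0, n0 \in l /\ forall n, n \in l -> le (u n) (u n0).
Proof.
elim: l x0 => [|a l IH] x0 //= _.
case: l IH => [|b l] IH.
  by exists a; split; rewrite ?inE // => n; rewrite inE => /eqP ->; apply: (wo_refl W).
have [n0 [Hn0 Hm]] := IH b (mem_head _ _).
case: (wo_total W (u a) (u n0)) => H.
- exists n0; split; first by rewrite inE Hn0 orbT.
  by move=> n; rewrite inE => /orP [/eqP ->|/Hm].
- exists a; split; first exact: mem_head.
  move=> n; rewrite inE => /orP [/eqP ->|/Hm]; first by apply: (wo_refl W).
  by move=> Hn; apply: (wo_trans W) H.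
Qed.

Lemma good_lt S (A B : structure S) (h : A -> B) (e : A -> A) (le : A -> A -> Prop)
  (W : WO le) (c : A) :
  model (ppTh A) B ->
  (forall d, sLT le d c -> GoodD h e (fun x => le x d)) ->
  GoodD h e (fun x => sLT le x c).
Proof.
move=> MB IH psi u Hf Hs.
case E: (fv psi) => [|x0 l].
  by apply: (base_sent e MB) Hs => n /fvP; rewrite E.
have [n0 [Hn0 Hm]] := list_max W u (mem_head x0 l).
rewrite -E in Hn0 Hm.
apply: (IH (u n0)) Hs; first by apply: Hf; apply/fvP.
by move=> n /fvP; apply: Hm.
Qed.

Lemma upd_comp (T : Type) (s : nat -> nat) (V : nat -> T) a :
  s 0 = 0 -> (forall m, s m = 0 -> m = 0) ->
  (fun n => update V 0 a (s n)) = update (fun n => V (s n)) 0 a.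
Proof.
move=> s0 sinj; apply: funext => n; rewrite /update.
case: (n =P 0) => [->|n0]; first by rewrite s0.
by case: (s n =P 0) => // /sinj.
Qed.

Definition s1 (m : nat) := m.*2.
Definition s2 (m : nat) := if m == 0 then 0 else (m.*2).-1.
Lemma s1inj : injective s1. Proof. exact: (can_inj doubleK). Qed.
Lemma s2inj : injective s2.
Proof.
rewrite /s2 => x y; case: x => [|x]; case: y => [|y] //=.
by case=> /(can_inj doubleK) ->.
Qed.
Definition mix (T : Type) (u U : nat -> T) (k : nat) : T :=
  if odd k then U (k.+1)./2 else u k./2.
Lemma mix1 T (u U : nat -> T) m : mix u U (s1 m) = u m.
Proof. by rewrite /mix /s1 odd_double doubleK. Qed.
Lemma mix2 T (u U : nat -> T) m : m <> 0 -> mix u U (s2 m) = U m.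
Proof.
case: m => // m _; rewrite /mix /s2 /=.
rewrite odd_double /=.
by rewrite doubleK.
Qed.

Lemma combine S (A B : structure S) (h : A -> B) (e : A -> A) (le : A -> A -> Prop) (c : A) :
  GoodD h e (fun x => sLT le x c) ->
  forall l : list (ppf S * (nat -> A)),
  (forall p, List.In p l -> Sig h le c e p.1 p.2) ->
  exists a : A, forall p, List.In p l -> sat (update p.2 0 a) p.1.
Proof.
move=> HG l Hl.
have [Psi [U [HP1 [HP2 HP3]]]] : exists (Psi : ppf S) (U : nat -> A),
   (forall m, free Psi m -> m <> 0 -> sLT le (U m) c) /\
   sat (update (fun n => h (U n)) 0 (h c)) Psi /\
   forall a, sat (update (fun n => e (U n)) 0 a) Psi ->
     forall p, List.In p l -> sat (update p.2 0 a) p.1.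
  elim: l Hl => [|[chi w] l IH] Hl.
    by exists (PEq 0 0), (fun _ => c); split; [move=> m [->|->]| split => // a _ p []].
  have [Psi [U [HP1 [HP2 HP3]]]] := IH (fun p Hp => Hl p (or_intror Hp)).
  have [u [Hu1 [Hu2 Hu3]]] : Sig h le c e chi w := Hl _ (or_introl erefl).
  exists (PAnd (rename s1 chi) (rename s2 Psi)), (mix u U).
  have s10 : s1 0 = 0 by [].
  have s1z : forall m, s1 m = 0 -> m = 0 by case.
  have s20 : s2 0 = 0 by [].
  have s2z : forall m, s2 m = 0 -> m = 0 by case.
  split; [|split].
  - move=> m Hm m0; case: Hm => Hm.
      have [m' [Em Hm']] := free_rename s1inj Hm; subst m.
      by rewrite mix1; apply: Hu1 => // E; apply: m0; rewrite E.
    have [m' [Em Hm']] := free_rename s2inj Hm; subst m.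
    have m'0 : m' <> 0 by move=> E; apply: m0; rewrite E.
    by rewrite mix2 //; apply: HP1.
  - split.
    + rewrite (sat_rename s1inj) upd_comp //.
      by apply: sat_ext Hu3 => n _; rewrite /update; case: eqP => // _; rewrite mix1.
    + rewrite (sat_rename s2inj) upd_comp //.
      by apply: sat_ext HP2 => n _; rewrite /update; case: eqP => // /eqP n0; rewrite mix2 //; apply/eqP.
  - move=> a Ha.
    have [H1 H2] : sat (update (fun n => e (mix u U n)) 0 a) (rename s1 chi) /\
                   sat (update (fun n => e (mix u U n)) 0 a) (rename s2 Psi) := Ha.
    move=> p [<-|Hp]; last first.
      apply: (HP3 a _ p Hp); move: H2; rewrite (sat_rename s2inj) upd_comp //.
      by apply: sat_ext => n _; rewrite /update; case: eqP => // /eqP n0; rewrite mix2 //; apply/eqP.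
    change (sat (update w 0 a) chi).
    move: H1; rewrite (sat_rename s1inj) upd_comp //.
    apply: sat_ext => n Hn; rewrite /update; case: eqP => // /eqP n0.
    by rewrite mix1 Hu2 //; apply/eqP.
have [a Ha] : sat (fun n => e (U n)) (PEx 0 Psi).
  apply: HG; first by move=> n [n0 Hn]; apply: HP1.
  by exists (h c).
by exists a; apply: HP3.
Qed.

Lemma realize S (A : structure S) (P : A -> Prop) (Sg : ppf S -> (nat -> A) -> Prop) :
  (pp_saturated A /\ fewer_than_carrier P) \/ finite_structure A ->
  (forall f v, Sg f v -> forall n, free f n -> n <> 0 -> P (v n)) ->
  (forall l : list (ppf S * (nat -> A)),
     (forall p, List.In p l -> Sg p.1 p.2) ->
     exists a : A, forall p, List.In p l -> sat (update p.2 0 a) p.1) ->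
  exists a : A, forall f v, Sg f v -> sat (update v 0 a) f.
Proof.
case=> [[Hsat HP]|[s Hs]] Hpar Hfin.
  by apply: (Hsat P HP).
apply: NNPP => H.
have Hbad : forall a : A, exists f v, Sg f v /\ ~ sat (update v 0 a) f.
  move=> a; apply: NNPP => H'; apply: H; exists a => f v Hfv.
  apply: NNPP => Hn; apply: H'; by exists f, v.
have [l [Hl1 Hl2]] : exists l : list (ppf S * (nat -> A)),
    (forall p, List.In p l -> Sg p.1 p.2) /\
    forall a, List.In a s -> exists p, List.In p l /\ ~ sat (update p.2 0 a) p.1.
  elim: s {Hs} => [|x s [l [Hl1 Hl2]]].
    by exists nil; split.
  have [f [v [Hfv Hn]]] := Hbad x.
  exists ((f, v) :: l); split.
    by move=> p [<-|Hp] //; apply: Hl1.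
  move=> a [<-|Ha]; first by exists (f, v); split => //; left.
  by have [p [Hp Hnp]] := Hl2 a Ha; exists p; split => //; right.
have [a Ha] := Hfin l Hl1.
by have [p [Hp Hnp]] := Hl2 a (Hs a); apply: Hnp; apply: Ha.
Qed.

Lemma sval_inj_P (T : Type) (P : T -> Prop) (a b : {x | P x}) : sval a = sval b -> a = b.
Proof.
case: a => a pa; case: b => b pb /= E; subst b.
by rewrite (Prop_irrelevance pa pb).
Qed.

Lemma small_P (T : Type) (le : T -> T -> Prop) (M : MinWO le) (c : T) (e : T -> T) :
  fewer_than_carrier (fun y => exists d, sLT le d c /\ y = e d).
Proof.
move=> [g ginj]; case: M => _ M; apply: (M c).
pose k (x : T) : {d | sLT le d c} :=
  let H := proj2_sig (g x) in
  exist _ (proj1_sig (cid H)) (proj1 (proj2_sig (cid H))).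
exists k => x y E; apply: ginj.
have Ex : proj1_sig (g x) = e (proj1_sig (k x)) by rewrite /k /=; case: (cid _) => d [].
have Ey : proj1_sig (g y) = e (proj1_sig (k y)) by rewrite /k /=; case: (cid _) => d [].
by apply: sval_inj_P; rewrite Ex Ey E.
Qed.

Lemma good_le S (A B : structure S) (h : A -> B) (e : A -> A) (le : A -> A -> Prop) (c : A) :
  GoodD h e (fun x => sLT le x c) ->
  (forall f w, Sig h le c e f w -> sat (update w 0 (e c)) f) ->
  GoodD h e (fun x => le x c).
Proof.
move=> HG Hc psi u Hf Hs.
pose Z := [seq n.+1 | n <- [seq n <- fv psi | `[< u n = c >]]].
have Z0 : 0 \notin Z by apply/mapP; case.
have HZ : forall n, (n.+1 \in Z) = (n \in fv psi) && `[< u n = c >].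
  by move=> n; rewrite /Z (mem_map succn_inj) mem_filter andbC.
pose chi := bindeq Z (rename succn psi).
have key : forall (C : structure S) (g : A -> C) x,
    sat (update (fun m => g (u m.-1)) 0 x) chi <->
    sat (fun n => if n.+1 \in Z then x else g (u n)) psi.
  move=> C g x; rewrite /chi sat_bindeq // (sat_rename succn_inj).
  by apply: sat_ext_iff => n _; rewrite /update /=.
have Hsig : Sig h le c e chi (fun m => e (u m.-1)).
  exists (fun m => u m.-1); split; [|split] => //.
  - move=> m Hm m0; case: (free_bindeq Hm) => [//|[mZ Hm']].
    have [n [En Hn]] := free_rename succn_inj Hm'; subst m; split; first exact: Hf.
    move=> Eu; move: mZ; rewrite HZ.
    have Hn1 : n \in fv psi by apply/fvP.
    have Hc1 : `[< u n = c >] by apply/asboolP.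
    by rewrite Hn1 Hc1.
  - apply/(key B h); apply: sat_ext Hs => n Hn.
    case: ifP => //; rewrite HZ => /andP [_ /asboolP] ->.
    by [].
have := Hc _ _ Hsig; move/(key A e); apply: sat_ext => n Hn.
case: ifP => //; rewrite HZ => /andP [_ /asboolP] -> //.
Qed.

Lemma foldr_max_ge (l : seq nat) x : x \in l -> x <= foldr maxn 0 l.
Proof.
elim: l => [|a l IH] //=; rewrite inE => /orP [/eqP ->|/IH H].
  exact: leq_maxl.
by apply: leq_trans H (leq_maxr _ _).
Qed.

Lemma part1 S (A : structure S) : epc (ppTh A) A -> core A.
Proof.
move=> [MA Hepc] e he; split => //; split.
- move=> x y Exy.
  have := Hepc A e MA he (fun n => if n == 0 then x else y) (PEq 0 1).
  by apply => /=.
- move=> r t Ht.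
  case: (pselect (exists a : A, True)) => [[a0 _]|nA]; last first.
    have E : (fun k => e (t k)) = t by apply: funext => k; case: nA; exists (t k).
    by rewrite E in Ht.
  pose v n := match insub n with Some k => t k | None => a0 end.
  have Hv : forall k : 'I_(arity r), v k = t k by move=> k; rewrite /v valK.
  have := Hepc A e MA he v (@PRel S r (fun k => nat_of_ord k)) => /=.
  have -> : (fun k : 'I_(arity r) => e (v k)) = (fun k => e (t k)) by apply: funext => k; rewrite Hv.
  have -> : (fun k : 'I_(arity r) => v k) = t by apply: funext => k; rewrite Hv.
  by apply.
Qed.

Lemma part2 S (A : structure S) :
  (pp_saturated A \/ finite_structure A) -> all_pp_definable_named A ->
   core A -> epc (ppTh A) A.
Proof.
move=> Hsat Hnamed Hcore; split.
  by move=> [f|f] [_ H].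
move=> B h MB hh v phi Hphi.
have [le M] := minwo_exists A.
have W := M.1.
pose e := ebuild h (wo_wf W).
have He : forall c, e c = Fsel c (Sig h le c e) by move=> c; apply: ebuild_eq.
have Hall : forall c, GoodD h e (fun x => le x c).
  move=> c; pattern c; apply: (well_founded_ind (wo_wf W)) => {}c IH.
  have G1 := good_lt W MB IH.
  apply: (good_le G1) => f w Hfw; rewrite He; apply: Fsel_spec => //.
  apply: (@realize S A (fun y => exists d, sLT le d c /\ y = e d)).
  - case: Hsat => [Hs|Hf]; [left; split => //; exact: small_P | by right].
  - move=> f' w' [u [Hu1 [Hu2 _]]] n Hn n0.
    by exists (u n); split; [apply: Hu1 | apply: Hu2].
  - exact: combine.
have Gfull : forall psi (u : nat -> A), sat (fun n => h (u n)) psi -> sat (fun n => e (u n)) psi.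
  move=> psi u Hs; case E: (fv psi) => [|x0 l].
    by apply: (base_sent e MB) Hs => n /fvP; rewrite E.
  have [n0 [Hn0 Hm]] := list_max W u (mem_head x0 l).
  rewrite -E in Hn0 Hm.
  by apply: (Hall (u n0)) Hs => n /fvP; apply: Hm.
have ehom : hom e.
  move=> r t Ht.
  pose u n := match insub n with Some k => t k | None => v 0 end.
  have Hu : forall k : 'I_(arity r), u k = t k by move=> k; rewrite /u valK.
  have := Gfull (@PRel S r (fun k => nat_of_ord k)) u => /=.
  have -> : (fun k : 'I_(arity r) => h (u k)) = (fun k => h (t k)) by apply: funext => k; rewrite Hu.
  have -> : (fun k : 'I_(arity r) => e (u k)) = (fun k => e (t k)) by apply: funext => k; rewrite Hu.
  by move=> H; apply: H; apply: hh.
have [_ [_ Hrefl]] := Hcore e ehom.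
pose n := (foldr maxn 0 (fv phi)).+1.
have Hfree : forall m, free phi m -> m < n.
  by move=> m /fvP Hm; rewrite ltnS; apply: foldr_max_ge.
pose R (t : 'I_n -> A) := forall w : nat -> A, (forall i : 'I_n, w i = t i) -> sat w phi.
have Hdef : @pp_definable S A n R by exists phi; split.
have [r [E Hr]] := Hnamed n R Hdef.
have HR : R (fun i : 'I_n => v i).
  apply/Hr; apply: Hrefl.
  have HRe : R (fun i : 'I_n => e (v i)).
    move=> w Hw; move: (Gfull phi v Hphi); apply: sat_ext => m Hm.
    by rewrite (Hw (Ordinal (Hfree m Hm))).
  exact: (proj2 (Hr _) HRe).
by apply: HR.
Qed.

Theorem proposition4 (S : signature) (A : structure S) :
  (epc (ppTh A) A -> core A) /\
  ((pp_saturated A \/ finite_structure A) -> all_pp_definable_named A ->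
   core A -> epc (ppTh A) A).
Proof. split; [exact: part1 | exact: part2]. Qed.
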